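(* Let $G$ be a finite group. (1) The Fitting subgroup $\mathrm{Fit}(G)$ is atomically universally definable. (2) If $N\le H\le G$ with $N\trianglelefteq G$, $H/N$ atomically universally definable in $G/N$ and $N$ atomically universally definable in $G$, then $H$ is atomically universally definable in $G$. (3) All terms $\mathcal{U}_iG$ of the upper Fitting series are atomically universally definable. (4) If $H\le G$ is inducible, then the centralizer $C_G(H)=\{g\in G: gh=hg\text{ for all }h\in H\}$ is atomically universally definable.
   Context: An expression over $G$ is a word over $G\cup\mathcal{X}\cup\mathcal{X}^{-1}$ ($\mathcal{X}$ variables, $\mathcal{X}^{-1}$ formal inverses), evaluated under assignments $\sigma:\mathcal{X}\to G$ extended by $\sigma(X^{-1})=\sigma(X)^{-1}$, $\sigma(g)=g$. A subset $S\subseteq G$ is inducible if there is an expression $\alpha$ with $S=\{\sigma(\alpha):\sigma:\mathcal{X}\to G\}$. A subset $S\subseteq G$ is atomically universally definable if there is an expression $\alpha$ over variables $\{X,Y_1,Y_2,\dots\}$ such that $S=\{g\in G: (\sigma\cup[X\mapsto g])(\alpha)=1\text{ for all }\sigma:\{Y_1,Y_2,\dots\}\to G\}$. $\mathrm{Fit}(G)$ is the largest nilpotent normal subgroup of $G$; the upper Fitting series is $\mathcal{U}_0G=1$, $\mathcal{U}_{i+1}G/\mathcal{U}_iG=\mathrm{Fit}(G/\mathcal{U}_iG)$. *)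

(* Defs.v *)
From mathcomp Require Import all_boot all_fingroup all_solvable.
Set Implicit Arguments. Unset Strict Implicit. Unset Printing Implicit Defensive.
Import GroupScope.
Local Open Scope group_scope.

Inductive letter (T : Type) :=
| LConst of T
| LVar of nat
| LVarInv of nat.

Definition expr (T : Type) := seq (letter T).

Section Eval.
Variable gT : finGroupType.

Definition eval_letter (s : nat -> gT) (l : letter gT) : gT :=
  match l with
  | LConst g => g
  | LVar i => s i
  | LVarInv i => (s i)^-1
  end.

Definition eval (s : nat -> gT) (a : expr gT) : gT :=
  foldr (fun l acc => eval_letter s l * acc) 1 a.

Definition expr_over (G : {set gT}) (a : expr gT) : Prop :=
  foldr (fun l P => (match l with LConst g => g \in G | _ => True end) /\ P) True a.

Definition assign_in (G : {set gT}) (s : nat -> gT) : Prop := forall i, s i \in G.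

(* variable 0 plays the role of X; variables 1,2,... play Y_1, Y_2, ... *)
Definition upd0 (s : nat -> gT) (g : gT) : nat -> gT :=
  fun i => if i == 0%N then g else s i.

Definition inducible (G S : {set gT}) : Prop :=
  exists a : expr gT, expr_over G a /\
    forall g, g \in S <-> exists s, assign_in G s /\ eval s a = g.

Definition aud (G S : {set gT}) : Prop :=
  exists a : expr gT, expr_over G a /\
    forall g, g \in S <->
      (g \in G /\ forall s, assign_in G s -> eval (upd0 s g) a = 1).

Fixpoint upper_fitting (G : {set gT}) (n : nat) : {set gT} :=
  match n with
  | 0 => 1
  | n'.+1 => coset (upper_fitting G n') @*^-1 'F(G / upper_fitting G n')
  end.
End Eval.

(* Main.v *)
Require Import Defs.
From mathcomp Require Import all_boot all_fingroup all_solvable.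
Set Implicit Arguments. Unset Strict Implicit. Unset Printing Implicit Defensive.
Import GroupScope.
Local Open Scope group_scope.

Section Words.
Variable gT : finGroupType.
Implicit Types (s : nat -> gT) (a b : expr gT).

Definition inv_letter (l : letter gT) : letter gT :=
  match l with LConst g => LConst g^-1 | LVar i => LVarInv gT i | LVarInv i => LVar gT i end.
Definition winv a : expr gT := rev (map inv_letter a).

Lemma eval_cat s a b : eval s (a ++ b) = eval s a * eval s b.
Proof. by elim: a => [|l a IH] /=; rewrite ?mul1g // IH mulgA. Qed.

Lemma eval_rcons s a l : eval s (rcons a l) = eval s a * eval_letter s l.
Proof. by rewrite -cats1 eval_cat /= mulg1. Qed.

Lemma eval_winv s a : eval s (winv a) = (eval s a)^-1.
Proof.
elim: a => [|l a IH] /=; first by rewrite invg1.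
rewrite /winv map_cons rev_cons eval_rcons -/(winv a) IH invMg.
by case: l => [g|i|i] /=; rewrite ?invgK.
Qed.

Lemma eq_eval s1 s2 a : (forall i, s1 i = s2 i) -> eval s1 a = eval s2 a.
Proof. by move=> E; elim: a => [|[g|i|i] a IH] //=; rewrite IH ?E. Qed.

Definition subst (sg : nat -> expr gT) a : expr gT :=
  flatten (map (fun l => match l with LConst g => [:: LConst g]
     | LVar i => sg i | LVarInv i => winv (sg i) end) a).

Lemma eval_subst s sg a : eval s (subst sg a) = eval (fun i => eval s (sg i)) a.
Proof.
elim: a => [|l a IH] //=; rewrite /subst map_cons /= eval_cat -/(subst sg a) IH.
by case: l => [g|i|i] //=; rewrite ?eval_winv ?mulg1.
Qed.

Lemma expr_over_cat (G : {set gT}) a b : expr_over G a -> expr_over G b -> expr_over G (a ++ b).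
Proof. by elim: a => [|l a IH] //= [H1 H2] Hb; split => //; apply: IH. Qed.

Lemma expr_over_winv (G : {group gT}) a : expr_over G a -> expr_over G (winv a).
Proof.
elim: a => [|l a IH] //= [H1 H2].
rewrite /winv map_cons rev_cons -/(winv a) -cats1; apply: expr_over_cat; first exact: IH.
by case: l H1 => //= g Hg; split => //; rewrite groupV.
Qed.

Lemma expr_over_subst (G : {group gT}) sg a :
  (forall i, expr_over G (sg i)) -> expr_over G a -> expr_over G (subst sg a).
Proof.
move=> Hs; elim: a => [|l a IH] //= [H1 H2].
rewrite /subst map_cons /= -/(subst sg a); apply: expr_over_cat; last exact: IH.
by case: l H1 => //= *; apply: expr_over_winv.
Qed.

Definition var i : expr gT := [:: LVar gT i].
Lemma eval_var s i : eval s (var i) = s i.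
Proof. by rewrite /= mulg1. Qed.
Lemma expr_over_var (G : {set gT}) i : expr_over G (var i).
Proof. by []. Qed.

Definition wcomm a b := winv a ++ winv b ++ a ++ b.
Lemma eval_wcomm s a b : eval s (wcomm a b) = [~ eval s a, eval s b].
Proof. by rewrite /wcomm !eval_cat !eval_winv /commg /conjg !mulgA. Qed.
Lemma expr_over_wcomm (G : {group gT}) a b :
  expr_over G a -> expr_over G b -> expr_over G (wcomm a b).
Proof. by move=> Ha Hb; do !apply: expr_over_cat => //; apply: expr_over_winv. Qed.

Definition wconj a b := winv b ++ a ++ b.
Lemma eval_wconj s a b : eval s (wconj a b) = eval s a ^ eval s b.
Proof. by rewrite /wconj !eval_cat !eval_winv /conjg !mulgA. Qed.
Lemma expr_over_wconj (G : {group gT}) a b :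
  expr_over G a -> expr_over G b -> expr_over G (wconj a b).
Proof. by move=> Ha Hb; do !apply: expr_over_cat => //; apply: expr_over_winv. Qed.

End Words.
Fixpoint lc (gT : finGroupType) (f : nat -> gT) (n : nat) : gT :=
  if n is m.+1 then [~ lc f m, f m.+1] else f 0%N.

Lemma eq_lc (gT : finGroupType) (f1 f2 : nat -> gT) n :
  (forall i, i <= n -> f1 i = f2 i) -> lc f1 n = lc f2 n.
Proof.
elim: n => [|n IH] E /=; first by rewrite E.
by rewrite IH ?E // => i Hi; apply: E; apply: leqW.
Qed.

Lemma lc_mem (gT : finGroupType) (G : {group gT}) (f : nat -> gT) n :
  (forall i, f i \in G) -> lc f n \in G.
Proof. by move=> H; elim: n => [|n IH] //=; rewrite groupR. Qed.

Lemma lc_nil n : forall (gT : finGroupType) (S : {set gT}),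
  (forall f : nat -> gT, (forall i, f i \in S) -> lc f n = 1) -> nilpotent <<S>>.
Proof.
elim: n => [|n IH] gT S H.
  apply: (nilpotentS _ (nilpotent1 gT)); rewrite gen_subG.
  by apply/subsetP => x Hx; rewrite inE; apply/eqP; apply: (H (fun _ => x)).
set N := <<S>>.
have SN : S \subset N by apply: sub_gen.
have inZ : forall f : nat -> gT, (forall i, f i \in S) -> lc f n \in 'Z(N).
  move=> f Hf; apply/subcentP; split.
    by apply: (lc_mem (G := N)) => i; apply: (subsetP SN).
  apply/centP; rewrite cent_gen; apply/centP => y Hy.
  pose f' := fun i => if i == n.+1 then y else f i.
  have Hf' : forall i, f' i \in S by move=> i; rewrite /f'; case: eqP.
  have := H f' Hf'; rewrite /= {2}/f' eqxx.
  rewrite (@eq_lc _ f' f) => [/eqP/commgP//|i Hi].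
  by rewrite /f'; case: eqP => // E; move: Hi; rewrite E ltnn.
set Z := 'Z(N).
have SnZ : S \subset 'N(Z).
  by apply: (subset_trans SN); apply: normal_norm; apply: center_normal.
rewrite -quotient_center_nil /N quotient_gen //.
apply: IH => f' Hf'.
pose f := fun i => odflt 1 [pick x in S | coset Z x == f' i].
have Hf : forall i, f i \in S /\ coset Z (f i) = f' i.
  move=> i; rewrite /f; case: pickP => [x /andP [Hx /eqP E]|] //=.
  move=> H0; exfalso; move: (Hf' i) => /morphimP [x Hx1 Hx2 E].
  by move: (H0 x); rewrite Hx2 -E eqxx.
have E : forall m, lc f' m = coset Z (lc f m).
  elim=> [|m IHm] /=; first by rewrite (proj2 (Hf 0%N)).
  rewrite morphR; first by rewrite IHm -(proj2 (Hf m.+1)).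
    have SnZ' : N \subset 'N(Z) by apply: normal_norm; apply: center_normal.
    by apply: (subsetP SnZ'); apply: (lc_mem (G := N)) => i; apply: (subsetP SN); case: (Hf i).
  by apply: (subsetP SnZ); case: (Hf m.+1).
rewrite E; apply: coset_id; apply: inZ => i; by case: (Hf i).
Qed.

Fixpoint Wfit (gT : finGroupType) (n : nat) : expr gT :=
  if n is m.+1 then wcomm (Wfit gT m) (wconj (var gT 0) (var gT m.+2))
  else wconj (var gT 0) (var gT 1).

Lemma eval_Wfit (gT : finGroupType) (s : nat -> gT) n :
  eval s (Wfit gT n) = lc (fun i => s 0%N ^ s i.+1) n.
Proof.
elim: n => [|n IH]; first by rewrite eval_wconj !eval_var.
by rewrite [Wfit _ _.+1]/= eval_wcomm IH eval_wconj !eval_var.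
Qed.

Lemma expr_over_Wfit (gT : finGroupType) (G : {group gT}) n : expr_over G (Wfit gT n).
Proof.
elim: n => [|n IH]; first by apply: expr_over_wconj.
by apply: expr_over_wcomm => //; apply: expr_over_wconj.
Qed.

Lemma lc_lcn (gT : finGroupType) (A : {group gT}) (f : nat -> gT) n :
  (forall i, f i \in A) -> lc f n \in 'L_n.+1(A).
Proof.
move=> H; elim: n => [|n IH] /=; first by rewrite lcn1.
by rewrite lcnSn; apply: mem_commg.
Qed.

Lemma part1 (gT : finGroupType) (G : {group gT}) : aud G 'F(G).
Proof.
have /lcnP [c Hc] := Fitting_nil G.
exists (Wfit gT c); split; first exact: expr_over_Wfit.
move=> g; split.
  move=> Hg; split; first exact: (subsetP (Fitting_sub G)).
  move=> s Hs; rewrite eval_Wfit.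
  have : lc (fun i => upd0 s g 0 ^ upd0 s g i.+1) c \in 'L_c.+1('F(G)).
    apply: lc_lcn => i; rewrite /upd0 /= memJ_norm //.
    by apply: (subsetP (normal_norm (Fitting_normal G))).
  by rewrite Hc inE => /eqP.
move=> [Hg H].
have Hnil : nilpotent <<g ^: G>>.
  apply: (lc_nil (n := c)) => f Hf.
  pose y := fun i => odflt 1 [pick y in G | g ^ y == f i].
  have Hy : forall i, y i \in G /\ g ^ y i = f i.
    move=> i; rewrite /y; case: pickP => [x /andP [Hx /eqP E]|] //=.
    move=> H0; exfalso; move: (Hf i) => /imsetP [x Hx E].
    by move: (H0 x); rewrite Hx E eqxx.
  pose s := fun i => if i is j.+1 then y j else 1.
  have Hs : assign_in G s by move=> [|i] /=; [exact: group1 | case: (Hy i)].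
  have := H s Hs; rewrite eval_Wfit => <-.
  by apply: eq_lc => i _ /=; case: (Hy i).
have Hn : <<g ^: G>> <| G.
  apply/andP; split; first by rewrite gen_subG class_subG.
  exact: (subset_trans (class_norm g G) (norm_gen _)).
apply: (subsetP (Fitting_max Hn Hnil)).
by apply: mem_gen; apply: class_refl.
Qed.

Lemma part4 (gT : finGroupType) (G H : {group gT}) :
  H \subset G -> inducible G H -> aud G 'C_G(H).
Proof.
move=> sHG [b [Hb Hind]].
exists (wcomm (var gT 0) (subst (fun i => var gT i.+1) b)); split.
  by apply: expr_over_wcomm => //; apply: expr_over_subst.
have E : forall s g, eval (upd0 s g) (wcomm (var gT 0) (subst (fun i => var gT i.+1) b))
                     = [~ g, eval (fun i => s i.+1) b].
  move=> s g; rewrite eval_wcomm eval_var eval_subst; congr [~ _, _].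
  by apply: eq_eval => i; rewrite eval_var.
move=> g; split.
  move=> /setIP [Hg Hc]; split => // s Hs; rewrite E; apply/eqP/commgP.
  apply: (centP Hc); apply/Hind; exists (fun i => s i.+1); split => // i.
move=> [Hg Hall]; apply/setIP; split => //; apply/centP => h /Hind [s [Hs Es]].
pose s' := fun i => if i is j.+1 then s j else 1.
have Hs' : assign_in G s' by move=> [|i] //=.
have := Hall s' Hs'; rewrite E -Es.
have -> : eval (fun i => s' i.+1) b = eval s b by apply: eq_eval.
by move/eqP/commgP/commute_sym.
Qed.

Section Part2.
Variable gT : finGroupType.

Definition sig2 (a' : expr gT) (i : nat) : expr gT :=
  if i is j.+1 then var gT j.*2.+1 else subst (fun i => var gT i.*2) a'.

Lemma eval_beta (a' c : expr gT) (s : nat -> gT) g :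
  eval (upd0 s g) (subst (sig2 a') c) =
  eval (upd0 (fun i => s i.*2.-1) (eval (upd0 (fun i => s i.*2) g) a')) c.
Proof.
rewrite eval_subst; apply: eq_eval => [[|j]] /=.
  by rewrite eval_subst; apply: eq_eval => [[|k]]; rewrite eval_var.
by rewrite mulg1 /upd0 /=.
Qed.

Lemma expr_over_beta (G : {group gT}) (a' c : expr gT) :
  expr_over G a' -> expr_over G c -> expr_over G (subst (sig2 a') c).
Proof.
move=> Ha Hc; apply: expr_over_subst => // [[|j]] //=.
by apply: expr_over_subst.
Qed.
End Part2.

Definition liftl (aT rT : Type) (f : aT -> rT) (l : letter aT) : letter rT :=
  match l with LConst x => LConst (f x) | LVar i => LVar rT i | LVarInv i => LVarInv rT i end.

Lemma liftw_over (aT rT : finGroupType) (A : {set aT}) (B : {set rT}) (f : aT -> rT) a :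
  (forall x, x \in A -> f x \in B) -> expr_over A a -> expr_over B (map (liftl f) a).
Proof.
move=> Hf; elim: a => [|l a IH] //= [H1 H2]; split; last exact: IH.
by case: l H1 => //= x /Hf.
Qed.

Lemma liftw_eval (gT : finGroupType) (G N : {group gT}) (lift : coset_of N -> gT)
   (a : expr (coset_of N)) (s : nat -> gT) :
  G \subset 'N(N) ->
  (forall x, x \in G / N -> lift x \in G /\ coset N (lift x) = x) ->
  expr_over (G / N) a -> assign_in G s ->
  eval s (map (liftl lift) a) \in G /\
  coset N (eval s (map (liftl lift) a)) = eval (fun i => coset N (s i)) a.
Proof.
move=> nNG Hl; elim: a => [|l a IH] /=; first by rewrite morph1.
move=> [H1 /IH {}IH] Hs; have [IH1 IH2] := IH Hs.
have Hle : eval_letter s (liftl lift l) \in G /\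
   coset N (eval_letter s (liftl lift l)) = eval_letter (fun i => coset N (s i)) l.
  case: l H1 => [x /Hl //| i | i] _ /=; first by [].
  by rewrite groupV morphV //; apply: (subsetP nNG).
case: Hle => [L1 L2]; rewrite groupM // morphM; first by rewrite -L2 -IH2.
  by apply: (subsetP nNG).
by apply: (subsetP nNG).
Qed.

Lemma part2 (gT : finGroupType) (G H N : {group gT}) :
  N \subset H -> H \subset G -> N <| G ->
  aud (G / N) (H / N) -> aud G N -> aud G H.
Proof.
move=> sNH sHG nNG [a [Ha Halpha]] [c [Hc Hgamma]].
have nG : G \subset 'N(N) by apply: normal_norm.
pose lift := fun x : coset_of N => odflt 1 [pick y in G | coset N y == x].
have Hl : forall x, x \in G / N -> lift x \in G /\ coset N (lift x) = x.
  move=> x Hx; rewrite /lift; case: pickP => [y /andP [Hy /eqP E]|] //=.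
  move=> H0; exfalso; move: Hx => /morphimP [y Hy1 Hy2 E].
  by move: (H0 y); rewrite Hy2 E eqxx.
set a' := map (liftl lift) a.
have Ha' : expr_over G a' by apply: liftw_over Ha => x /Hl [].
exists (subst (sig2 a') c); split; first exact: expr_over_beta.
have Hev : forall s, assign_in G s -> forall g, g \in G ->
    eval (upd0 s g) a' \in G /\
    coset N (eval (upd0 s g) a') = eval (upd0 (fun i => coset N (s i)) (coset N g)) a.
  move=> s Hs g Hg; have Hs' : assign_in G (upd0 s g) by move=> [|i]; rewrite /upd0 //=; apply: Hs.
  have [E1 E2] := liftw_eval nG Hl Ha Hs'; split => //; rewrite E2.
  by apply: eq_eval => [[|i]].
move=> g; split.
  move=> Hg; have HgG := subsetP sHG g Hg; split => // s Hs.
  rewrite eval_beta.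
  have Hs2 : assign_in G (fun i => s i.*2) by move=> i; apply: Hs.
  have [E1 E2] := Hev _ Hs2 g HgG.
  have : eval (upd0 (fun i => s i.*2) g) a' \in N.
    apply: coset_idr; first by apply: (subsetP nG).
    have Hq : coset N g \in H / N by apply: mem_quotient.
    have [_ Hq2] := proj1 (Halpha _) Hq.
    rewrite E2; apply: Hq2.
    by move=> i; apply: mem_quotient.
  by move/Hgamma => [_ ->] //.
move=> [Hg Hall].
have nNH : N <| H by apply: normalS nNG.
rewrite -(quotientGK nNH); apply: mem_morphpre; first exact: (subsetP nG).
apply/Halpha; split; first exact: mem_quotient.
move=> s' Hs'.
pose u := fun i => lift (s' i).
have Hu : assign_in G u by move=> i; case: (Hl _ (Hs' i)).
have [E1 E2] := Hev _ Hu g Hg.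
have <- : coset N (eval (upd0 u g) a') = 1.
  apply: coset_id; apply/Hgamma; split => // t Ht.
  pose s := fun k => if odd k then t (k.+1)./2 else u (k./2).
  have Hs : assign_in G s by move=> k; rewrite /s; case: (odd k).
  have := Hall s Hs; rewrite eval_beta => <-.
  apply: eq_eval => [[|j]] /=.
    apply: eq_eval => [[|k]] //=.
    by rewrite /upd0 /s odd_double doubleK.
  by rewrite /upd0 /s doubleS /= odd_double doubleK.
transitivity (eval (upd0 (fun i => coset N (u i)) (coset N g)) a); last by rewrite -E2.
apply: eq_eval => [[|i]] //=.
by rewrite /upd0 /=; case: (Hl _ (Hs' i.+1)).
Qed.

Lemma uf_props (gT : finGroupType) (G : {group gT}) i :
  group_set (upper_fitting G i) /\ upper_fitting G i <| G.
Proof.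
elim: i => [|i [gs nNG]].
  split; first exact: (groupP 1%G). exact: normal1.
pose N := Group gs.
change (group_set (coset N @*^-1 'F(G / N)) /\ coset N @*^-1 'F(G / N) <| G).
split; first exact: morphpre_groupset.
have nNG' : N <| G by [].
by rewrite -{2}(quotientGK nNG') cosetpre_normal; apply: Fitting_normal.
Qed.

Lemma part3 (gT : finGroupType) (G : {group gT}) (i : nat) : aud G (upper_fitting G i).
Proof.
elim: i => [|i IH].
  exists (var gT 0); split => // g; split.
    move=> /set1P ->; split => // s _; by rewrite eval_var /upd0 /=.
  move=> [Hg H]; have := H (fun _ => 1) (fun _ => group1 G).
  by rewrite eval_var /upd0 /= => ->; apply: set11.
have [gs nNG] := uf_props G i.
have [gsH _] := uf_props G i.+1.
pose N := Group gs.
pose H := Group gsH.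
have nNG' : N <| G by [].
have nG : G \subset 'N(N) by apply: normal_norm.
have EH : gval H = coset N @*^-1 'F(G / N) by [].
change (aud G H); apply: (@part2 _ G H N).
- rewrite EH; apply: subset_trans (ker_sub_pre _ _); by rewrite ker_coset.
- rewrite EH -{2}(quotientGK nNG'); apply: morphpreS; exact: Fitting_sub.
- by [].
- rewrite EH /quotient morphpreK; first exact: (part1 (G / N)%G).
  apply: (subset_trans (Fitting_sub _)); exact: quotientS.
- exact: IH.
Qed.

Theorem lemma2p6 :
  (forall (gT : finGroupType) (G : {group gT}), aud G 'F(G)) /\
  (forall (gT : finGroupType) (G H N : {group gT}),
      N \subset H -> H \subset G -> N <| G ->
      aud (G / N) (H / N) -> aud G N -> aud G H) /\
  (forall (gT : finGroupType) (G : {group gT}) (i : nat),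
      aud G (upper_fitting G i)) /\
  (forall (gT : finGroupType) (G H : {group gT}),
      H \subset G -> inducible G H -> aud G 'C_G(H)).
Proof.
split; first exact: part1.
split; first exact: part2.
split; first exact: part3.
exact: part4.
Qed.
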